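(* Let $U,V$ be unitary operators on a finite-dimensional complex Hilbert space $\mathcal H$. Then there exists a real number $x$ such that $$D(U,V)=\tfrac12\,\|U-e^{ix}V\|,$$ where $\|\cdot\|$ is the operator norm $\|A\|=\max_{\|\psi\|=1}\|A\psi\|$.
   Context: For unitary operators $U,V$ on a finite-dimensional complex Hilbert space $\mathcal H$ define the u-distance $D(U,V)=\max_{\|\psi\|=1}\big(1-|\langle\psi,U^\dagger V\psi\rangle|^2\big)^{1/2}=\big(1-\min_{\|\psi\|=1}|\langle\psi,U^\dagger V\psi\rangle|^2\big)^{1/2}$. *)

(* Defs.v *)
From HB Require Import structures.
From mathcomp Require Import all_boot all_order all_algebra.
From mathcomp Require Import complex.
From mathcomp Require Import all_classical all_reals all_analysis.
Set Implicit Arguments. Unset Strict Implicit. Unset Printing Implicit Defensive.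
Import Order.TTheory GRing.Theory Num.Theory.
Local Open Scope ring_scope.
Local Open Scope classical_set_scope.

Definition adj {R : rcfType} {m n : nat} (A : 'M[R[i]]_(m, n)) : 'M[R[i]]_(n, m) :=
  (map_mx (@conjc R) A)^T.

Definition unitary {R : rcfType} {n : nat} (U : 'M[R[i]]_n) : Prop :=
  adj U *m U = 1%:M.

Definition cdot {R : rcfType} {n : nat} (u v : 'cV[R[i]]_n) : R[i] :=
  \sum_(i < n) conjc (u i 0) * v i 0.

Definition cabs {R : rcfType} (z : R[i]) : R := Normc.normc z.

Definition vnorm {R : rcfType} {n : nat} (v : 'cV[R[i]]_n) : R :=
  Num.sqrt (\sum_(i < n) cabs (v i 0) ^+ 2).

Definition opnorm {R : realType} {n : nat} (A : 'M[R[i]]_n) : R :=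
  sup [set vnorm (A *m psi) | psi in [set psi : 'cV[R[i]]_n | vnorm psi = 1]].

Definition udist {R : realType} {n : nat} (U V : 'M[R[i]]_n) : R :=
  sup [set Num.sqrt (1 - cabs (cdot psi (adj U *m V *m psi)) ^+ 2)
      | psi in [set psi : 'cV[R[i]]_n | vnorm psi = 1]].

Definition expi {R : realType} (x : R) : R[i] := Complex (cos x) (sin x).

(* Main.v *)
Require Import Defs.
From HB Require Import structures.
From mathcomp Require Import all_boot all_order all_algebra.
From mathcomp Require Import complex spectral.
From mathcomp Require Import all_classical all_reals all_analysis.
From mathcomp Require Import ring lra.
Set Implicit Arguments. Unset Strict Implicit. Unset Printing Implicit Defensive.
Import Order.TTheory GRing.Theory Num.Theory.
Import numFieldNormedType.Exports.
Local Open Scope ring_scope.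
Local Open Scope classical_set_scope.

Section Reduced.
Variable R : realType.
Variable n : nat.

Definition Qs : set 'rV[R]_n :=
  [set q | (forall k, 0 <= q ord0 k) /\ \sum_k q ord0 k = 1].

Definition erow (k : 'I_n) : 'rV[R]_n := \row_j ((j == k)%:R).

Lemma erow_Q k : Qs (erow k).
Proof.
split=> [j|]; first by rewrite mxE ler0n.
rewrite (bigD1 k) //= big1 ?mxE ?eqxx ?addr0 // => j /negbTE.
by rewrite mxE => ->.
Qed.

Lemma sum_erow (F : 'I_n -> R) k : \sum_j F j * erow k ord0 j = F k.
Proof.
rewrite (bigD1 k) //= big1 ?mxE ?eqxx ?addr0 ?mulr1 // => j /negbTE.
by rewrite mxE => ->; rewrite mulr0.
Qed.

Lemma Q_le1 q k : Qs q -> q ord0 k <= 1.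
Proof.
move=> [q0 <-]; rewrite (bigD1 k) //= lerDl sumr_ge0 // => j _; exact: q0.
Qed.

Lemma sum_le_max (F : 'I_n -> R) q M : Qs q -> (forall k, F k <= M) ->
  \sum_k F k * q ord0 k <= M.
Proof.
move=> [q0 q1] FM; rewrite -[M]mulr1 -q1 mulr_sumr.
by apply: ler_sum => k _; exact: ler_wpM2r.
Qed.

Lemma sum_ge_min (F : 'I_n -> R) q M : Qs q -> (forall k, M <= F k) ->
  M <= \sum_k F k * q ord0 k.
Proof.
move=> [q0 q1] FM; rewrite -[M]mulr1 -q1 mulr_sumr.
by apply: ler_sum => k _; exact: ler_wpM2r.
Qed.


Lemma cont_sum (T : topologicalType) (G : 'I_n -> T -> R) :
  (forall k, continuous (G k)) -> continuous (fun q => \sum_k G k q).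
Proof.
move=> Gc; apply: (@continuous_big R _ +%R 0 xpredT _ T (index_enum _) G); last by move=> k _; exact: Gc.
exact: add_continuous.
Qed.

Lemma coordc k : continuous (fun q : 'rV[R]_n => q ord0 k).
Proof. exact: coord_continuous. Qed.

Lemma Qs_closed : closed Qs.
Proof.
have -> : Qs = (\bigcap_(k in [set: 'I_n]) ((fun q : 'rV[R]_n => q ord0 k) @^-1` [set x | 0 <= x]))
   `&` ((fun q : 'rV[R]_n => \sum_k q ord0 k) @^-1` [set x | x = 1]).
  apply/seteqP; split=> q /=.
    by move=> [q0 q1]; split => // k _; exact: q0.
  by move=> [q0 q1]; split => // k; exact: q0.
apply: closedI.
  apply: closed_bigI => k _; apply: preimage_closed; last exact: closed_ge.
  by move=> x _; exact: coordc.
apply: preimage_closed; last exact: closed_eq.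
move=> x _; apply: cont_sum => k; exact: coordc.
Qed.

Lemma Qs_compact : compact Qs.
Proof.
have := (@rV_compact R n (fun=> `[(0:R), 1]%classic)).
move=> H.
have {H} := H (fun _ => @segment_compact R 0 1).
move=> H.
apply: (subclosed_compact Qs_closed H).
move=> q Qq i /=; rewrite in_itv /=; apply/andP; split.
  by case: Qq => q0 _; exact: q0.
exact: Q_le1.
Qed.


Lemma cD (T : topologicalType) (f g : T -> R) : continuous f -> continuous g ->
  continuous (fun x => f x + g x).
Proof. by move=> cf cg x; apply: (@continuousD R R^o T f g x); [exact: cf|exact: cg]. Qed.

Lemma cM (T : topologicalType) (f g : T -> R) : continuous f -> continuous g ->
  continuous (fun x => f x * g x).
Proof. move=> cf cg x; exact: (cvgM (cf x) (cg x)). Qed.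

Lemma cC (T : topologicalType) (c : R) : continuous (fun _ : T => c).
Proof. by move=> x; apply: cst_continuous. Qed.

Lemma fo_cond (s N : R) : 0 <= N ->
  (forall t, 0 < t -> t <= 1 -> 0 <= t * (2 * s + t * N)) -> 0 <= s.
Proof.
move=> N0 H; rewrite leNgt; apply/negP => s0.
pose t := Num.min 1 (- s / (N + 1)).
have N1 : 0 < N + 1 by lra.
have tpos : 0 < t by rewrite /t lt_min ltr01 /= divr_gt0 // oppr_gt0.
have t1 : t <= 1 by rewrite /t ge_min lexx.
have tle : t <= - s / (N + 1) by rewrite /t ge_min lexx orbT.
have : t * N <= - s.
  apply: (le_trans (ler_wpM2r N0 tle)).
  rewrite mulrAC ler_pdivrMr // ler_wpM2l; lra.
move=> h; have := H t tpos t1.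
have : 2 * s + t * N < 0 by lra.
move=> h2 h3; have : t * (2 * s + t * N) < 0 by rewrite pmulr_rlt0.
lra.
Qed.

Definition Aof (a : 'I_n -> R) (q : 'rV[R]_n) := \sum_k a k * q ord0 k.

Lemma Aof_cont a : continuous (Aof a).
Proof.
apply: cont_sum => k; apply: cM; [exact: cC| exact: coordc].
Qed.

Lemma Aof_comb a (p : 'rV[R]_n) t k :
  Aof a ((1 - t) *: p + t *: erow k) = (1 - t) * Aof a p + t * a k.
Proof.
rewrite /Aof.
under eq_bigr => j _ do rewrite !mxE mulrDr.
rewrite big_split /= mulr_sumr.
congr (_ + _); first by apply: eq_bigr => j _; ring.
rewrite -(sum_erow a k) mulr_sumr; apply: eq_bigr => j _; rewrite !mxE; ring.
Qed.

Lemma comb_Q (p : 'rV[R]_n) t k : Qs p -> 0 <= t -> t <= 1 ->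
  Qs ((1 - t) *: p + t *: erow k).
Proof.
move=> [p0 p1] t0 t1; split=> [j|].
  rewrite !mxE; apply: addr_ge0; apply: mulr_ge0; [lra | exact: p0 | done | by rewrite ler0n].
under eq_bigr => j _ do rewrite !mxE.
rewrite big_split /= -!mulr_sumr p1.
have := erow_Q k => -[_]; rewrite /erow.
under eq_bigr => j _ do rewrite mxE.
by move=> ->; ring.
Qed.

Lemma minimizer (a b : 'I_n -> R) : (0 < n)%N ->
  exists2 p, Qs p & forall k,
    Aof a p ^+ 2 + Aof b p ^+ 2 <= Aof a p * a k + Aof b p * b k.
Proof.
move=> n0.
have Q0 : Qs !=set0 by exists (erow (Ordinal n0)); exact: erow_Q.
have cPhi : {within Qs, continuous (fun q => Aof a q * Aof a q + Aof b q * Aof b q)}.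
  apply: continuous_subspaceT; apply: cD; apply: cM; exact: Aof_cont.
have [p pQ pmin] := EVT_min_rV Q0 Qs_compact cPhi.
rewrite inE in pQ.
exists p => // k.
set A := Aof a p; set B := Aof b p.
suff : 0 <= A * (a k - A) + B * (b k - B) by lra.
apply: (@fo_cond _ ((a k - A) ^+ 2 + (b k - B) ^+ 2)).
  by apply: addr_ge0; apply: sqr_ge0.
move=> t t0 t1.
have := pmin ((1 - t) *: p + t *: erow k).
rewrite inE => /(_ (comb_Q k pQ (ltW t0) t1)).
rewrite !Aof_comb -/A -/B => h.
have -> : t * (2 * (A * (a k - A) + B * (b k - B)) +
   t * ((a k - A) ^+ 2 + (b k - B) ^+ 2)) =
  ((1 - t) * A + t * a k) * ((1 - t) * A + t * a k) +
  ((1 - t) * B + t * b k) * ((1 - t) * B + t * b k) - (A * A + B * B) by ring.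
lra.
Qed.


Definition cval (a b : 'I_n -> R) (x : R) k :=
  (1 - (cos x * a k - sin x * b k)) ^+ 2 + (cos x * b k + sin x * a k) ^+ 2.

Definition SDr (a b : 'I_n -> R) :=
  [set Num.sqrt (1 - (Aof a q ^+ 2 + Aof b q ^+ 2)) | q in Qs].

Definition SFr (a b : 'I_n -> R) x :=
  [set Num.sqrt (\sum_k cval a b x k * q ord0 k) | q in Qs].

Definition Mx (a b : 'I_n -> R) x := \big[Num.max/0]_k cval a b x k.

Lemma cval_ge0 a b x k : 0 <= cval a b x k.
Proof. by rewrite /cval addr_ge0 ?sqr_ge0. Qed.

Lemma supSF a b x : (0 < n)%N -> sup (SFr a b x) = Num.sqrt (Mx a b x).
Proof.
move=> n0.
have ub : ubound (SFr a b x) (Num.sqrt (Mx a b x)).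
  move=> _ [q qQ <-]; rewrite ler_sqrt; last first.
    by rewrite /Mx; apply: bigmax_ge_id.
  apply: sum_le_max => // k; exact: le_bigmax.
have ne : SFr a b x !=set0.
  by exists (Num.sqrt (\sum_k cval a b x k * erow (Ordinal n0) ord0 k)); exists (erow (Ordinal n0)) => //; exact: erow_Q.
apply/le_anti/andP; split; first exact: ge_sup.
have hs : forall k, Num.sqrt (cval a b x k) <= sup (SFr a b x).
  move=> k; apply: (ub_le_sup (ex_intro _ _ ub)).
  by exists (erow k); [exact: erow_Q | rewrite sum_erow].
have s0 : 0 <= sup (SFr a b x).
  exact: le_trans (sqrtr_ge0 _) (hs (Ordinal n0)).
rewrite -(ger0_norm s0) -sqrtr_sqr ler_sqrt ?sqr_ge0 //.
apply/bigmax_leP; split; first exact: sqr_ge0.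
move=> k _; rewrite -(sqr_sqrtr (cval_ge0 a b x k)).
by rewrite ler_sqr ?nnegrE ?sqrtr_ge0.
Qed.


Lemma cB (T : topologicalType) (f g : T -> R) : continuous f -> continuous g ->
  continuous (fun x => f x - g x).
Proof. by move=> cf cg x; apply: (@continuousB R R^o T f g x); [exact: cf|exact: cg]. Qed.

Lemma cX2 (T : topologicalType) (f : T -> R) : continuous f ->
  continuous (fun x => f x ^+ 2).
Proof.
move=> cf; have -> : (fun x => f x ^+ 2) = (fun x => f x * f x).
  by apply: funext => x; rewrite expr2.
exact: cM.
Qed.

Lemma cval_cont a b k : continuous (fun x => cval a b x k).
Proof.
have cc := @continuous_cos R; have cs := @continuous_sin R.
have cL : continuous (fun x => cos x * a k - sin x * b k).
  by apply: cB; apply: cM => //; exact: cC.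
have cN : continuous (fun x => cos x * b k + sin x * a k).
  by apply: cD; apply: cM => //; exact: cC.
have c1 : continuous (fun x => 1 - (cos x * a k - sin x * b k)).
  by apply: cB => //; exact: cC.
rewrite /cval; apply: cD; exact: cX2.
Qed.

Lemma Mx_cont a b : continuous (Mx a b).
Proof.
rewrite /Mx => x.
apply: (@continuous_big R _ Order.max 0 xpredT _ R (index_enum _) (fun k x => cval a b x k)).
  exact: max_continuous.
by move=> k _; exact: cval_cont.
Qed.

Lemma F_cont a b : continuous (fun x => 2^-1 * Num.sqrt (Mx a b x)).
Proof.
apply: cM; first exact: cC.
move=> x; apply: continuous_comp; first exact: Mx_cont.
exact: sqrt_continuous.
Qed.

Lemma angle (al be : R) : al ^+ 2 + be ^+ 2 = 1 -> exists x, cos x = al /\ sin x = be.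
Proof.
move=> h.
have hal : -1 <= al <= 1.
  have : al ^+ 2 <= 1 by rewrite -h lerDl sqr_ge0.
  by move=> H; apply/andP; split; nra.
have sa : sin (acos al) = `|be|.
  by rewrite sin_acos // -sqrtr_sqr; congr Num.sqrt; lra.
have [be0|be0] := leP 0 be.
  by exists (acos al); rewrite acosK ?in_itv //= sa ger0_norm.
exists (- acos al); rewrite cosN sinN acosK ?in_itv //= sa ltr0_norm //; split => //; lra.
Qed.


Lemma half_sqrt_le (M y : R) : 0 <= y -> M <= 4 * y -> 2^-1 * Num.sqrt M <= Num.sqrt y.
Proof.
move=> y0 My.
have h4 : Num.sqrt (4 * y) = 2 * Num.sqrt y.
  rewrite sqrtrM ?ler0n //; congr (_ * _).
  by rewrite (_ : 4 = 2 ^+ 2) ?sqrtr_sqr ?ger0_norm //; ring.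
have : Num.sqrt M <= 2 * Num.sqrt y.
  by rewrite -h4 ler_sqrt // mulr_ge0 ?ler0n.
have := sqrtr_ge0 y; lra.
Qed.

Theorem reduced (a b : 'I_n -> R) : (0 < n)%N ->
  (forall k, a k ^+ 2 + b k ^+ 2 = 1) ->
  exists x, sup (SDr a b) = 2^-1 * sup (SFr a b x).
Proof.
move=> n0 hab.
set k0 := Ordinal n0.
set F := fun x => 2^-1 * Num.sqrt (Mx a b x).
suff [x ->] : exists x, sup (SDr a b) = F x by exists x; rewrite supSF.
have ubD : ubound (SDr a b) 1.
  move=> _ [q qQ <-]; rewrite -[X in _ <= X]sqrtr1 ler_sqrt ?ler01 //.
  have := addr_ge0 (sqr_ge0 (Aof a q)) (sqr_ge0 (Aof b q)).
  move=> h; lra.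
have neD : SDr a b !=set0.
  by exists (Num.sqrt (1 - (Aof a (erow k0) ^+ 2 + Aof b (erow k0) ^+ 2))); exists (erow k0) => //; exact: erow_Q.
have D1 : sup (SDr a b) <= 1 by exact: ge_sup.
have [x0 [cx0 sx0]] : exists x, cos x = - a k0 /\ sin x = b k0.
  by apply: angle; rewrite sqrrN.
have F0 : 1 <= F x0.
  have c4 : cval a b x0 k0 = 4.
    rewrite /cval cx0 sx0.
    have := hab k0; move=> h.
    have -> : - a k0 * a k0 - b k0 * b k0 = - (a k0 ^+ 2 + b k0 ^+ 2) by ring.
    rewrite h; ring.
  have : 4 <= Mx a b x0 by rewrite -c4; exact: le_bigmax.
  move=> h; rewrite /F.
  have : Num.sqrt 4 <= Num.sqrt (Mx a b x0) by rewrite ler_sqrt // (le_trans _ h).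
  rewrite (_ : 4 = 2 ^+ 2) ?sqrtr_sqr ?ger0_norm //; last by ring.
  lra.
have [p pQ pmin] := minimizer a b n0.
set A := Aof a p in pmin; set B := Aof b p in pmin.
have Dp : Num.sqrt (1 - (A ^+ 2 + B ^+ 2)) <= sup (SDr a b).
  by apply: (ub_le_sup (ex_intro _ _ ubD)); exists p.
have [x1 F1] : exists x1, F x1 <= Num.sqrt (1 - (A ^+ 2 + B ^+ 2)).
  have [c20|c2pos] := eqVneq (A ^+ 2 + B ^+ 2) 0.
    exists 0; rewrite c20 subr0 sqrtr1.
    rewrite -sqrtr1; apply: half_sqrt_le; first exact: ler01.
    apply/bigmax_leP; split; first by rewrite mulr1 ler0n.
    move=> k _; rewrite /cval cos0 sin0 !mul1r !mul0r subr0 addr0 mulr1.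
    have := hab k; nra.
  have c2gt : 0 < A ^+ 2 + B ^+ 2 by rewrite lt_def c2pos addr_ge0 ?sqr_ge0.
  set c := Num.sqrt (A ^+ 2 + B ^+ 2).
  have cpos : 0 < c by rewrite sqrtr_gt0.
  have cc : c * c = A ^+ 2 + B ^+ 2 by rewrite -expr2 sqr_sqrtr // ltW.
  have [x1 [cx1 sx1]] : exists x, cos x = A / c /\ sin x = - B / c.
    apply: angle; rewrite !expr_div_n sqrrN -mulrDl -cc mulfV //.
    by rewrite mulf_neq0 // gt_eqF.
  have hL : forall k, cos x1 * a k - sin x1 * b k = (A * a k + B * b k) / c.
    by move=> k; rewrite cx1 sx1; field; rewrite gt_eqF.
  have hLN : forall k, (cos x1 * a k - sin x1 * b k) ^+ 2 + (cos x1 * b k + sin x1 * a k) ^+ 2 = 1.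
    move=> k; rewrite -(hab k) -[RHS]mul1r -(cos2Dsin2 x1); ring.
  have hge : forall k, c <= cos x1 * a k - sin x1 * b k.
    move=> k; rewrite hL ler_pdivlMr // cc; exact: pmin.
  have c1 : c <= 1.
    have := hge k0; have := hLN k0.
    set L := cos x1 * a k0 - sin x1 * b k0; set N := cos x1 * b k0 + sin x1 * a k0.
    move=> h1 h2; nra.
  exists x1; apply: half_sqrt_le.
    by rewrite -cc subr_ge0; nra.
  apply/bigmax_leP; split.
    by rewrite mulr_ge0 ?ler0n // -cc subr_ge0; nra.
  move=> k _; rewrite /cval.
  have := hLN k; have := hge k.
  set L := cos x1 * a k - sin x1 * b k; set N := cos x1 * b k + sin x1 * a k.
  rewrite -cc => h1 h2; nra.
have FD1 : F x1 <= sup (SDr a b) by exact: le_trans F1 Dp.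
have FD0 : sup (SDr a b) <= F x0 by exact: le_trans D1 F0.
have Fc : forall u v : R, {within `[u, v], continuous F}.
  by move=> u v; apply: continuous_subspaceT; exact: F_cont.
have [le10|lt01] := leP x1 x0.
  have [x _ Fx] := @IVT R F x1 x0 (sup (SDr a b)) le10 (Fc _ _)
    (ltac:(apply/andP; split; [by rewrite ge_min FD1 | by rewrite le_max FD0 orbT])).
  by exists x.
have [x _ Fx] := @IVT R F x0 x1 (sup (SDr a b)) (ltW lt01) (Fc _ _)
  (ltac:(apply/andP; split; [by rewrite ge_min FD1 orbT | by rewrite le_max FD0])).
by exists x.
Qed.

End Reduced.
Local Open Scope complex_scope.

Section Transfer.
Variable R : realType.

Lemma conj_mul_self (z : R[i]) : conjc z * z = ((cabs z) ^+ 2)%:C.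
Proof.
case: z => x y; rewrite /cabs /Normc.normc sqr_sqrtr ?addr_ge0 ?sqr_ge0 //=.
by congr Complex; ring.
Qed.

Lemma cabs_sqr (z : R[i]) : cabs z ^+ 2 = complex.Re z ^+ 2 + complex.Im z ^+ 2.
Proof. by case: z => x y; rewrite /cabs /Normc.normc sqr_sqrtr ?addr_ge0 ?sqr_ge0. Qed.

Lemma cabsM (z w : R[i]) : cabs (z * w) = cabs z * cabs w.
Proof. exact: Normc.normcM. Qed.

Variable n : nat.

Lemma cdotE (u v : 'cV[R[i]]_n) : cdot u v = (adj u *m v) 0 0.
Proof. by rewrite /cdot mxE; apply: eq_bigr => i _; rewrite !mxE. Qed.

Lemma adjM m p (A : 'M[R[i]]_(m, n)) (B : 'M[R[i]]_(n, p)) :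
  adj (A *m B) = adj B *m adj A.
Proof. by rewrite /adj map_mxM trmx_mul. Qed.

Lemma adjK m p (A : 'M[R[i]]_(m, p)) : adj (adj A) = A.
Proof.
by apply/matrixP => i j; rewrite /adj !mxE conjcK.
Qed.

Lemma cdotM (A : 'M[R[i]]_n) (u v : 'cV[R[i]]_n) :
  cdot (A *m u) v = cdot u (adj A *m v).
Proof. by rewrite !cdotE adjM mulmxA. Qed.

Definition nsq (y : 'cV[R[i]]_n) := \sum_k cabs (y k 0) ^+ 2.

Lemma cdot_self (u : 'cV[R[i]]_n) : cdot u u = (nsq u)%:C.
Proof.
rewrite /cdot /nsq rmorph_sum; apply: eq_bigr => i _; exact: conj_mul_self.
Qed.

Lemma nsq_unitary (M : 'M[R[i]]_n) y : adj M *m M = 1%:M ->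
  nsq (M *m y) = nsq y.
Proof.
move=> hM; apply: (@complexI R); rewrite -!cdot_self cdotM mulmxA hM mul1mx //.
Qed.

Lemma vnorm1 (y : 'cV[R[i]]_n) : (vnorm y = 1) <-> (nsq y = 1).
Proof.
have s0 : 0 <= nsq y by apply: sumr_ge0 => i _; exact: sqr_ge0.
rewrite /vnorm -/(nsq y); split => [h|->]; last exact: sqrtr1.
by rewrite -(sqr_sqrtr s0) h expr1n.
Qed.


Lemma cabs_sqr_expi x (z : R[i]) : cabs (1 - expi x * z) ^+ 2 =
  (1 - (cos x * complex.Re z - sin x * complex.Im z)) ^+ 2 +
  (cos x * complex.Im z + sin x * complex.Re z) ^+ 2.
Proof. by case: z => p q; rewrite cabs_sqr /=; ring. Qed.

Lemma cabs_real (r : R) : 0 <= r -> cabs (r%:C) ^+ 2 = r ^+ 2.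
Proof. by move=> r0; rewrite cabs_sqr /=; ring. Qed.

Lemma Re_sum (F : 'I_n -> R[i]) : complex.Re (\sum_k F k) = \sum_k complex.Re (F k).
Proof. by elim/big_rec2: _ => // i y1 y2 _ <-; case: (F i); case: y2. Qed.

Lemma Im_sum (F : 'I_n -> R[i]) : complex.Im (\sum_k F k) = \sum_k complex.Im (F k).
Proof. by elim/big_rec2: _ => // i y1 y2 _ <-; case: (F i); case: y2. Qed.

Lemma nsq_diag (u : 'rV[R[i]]_n) (y : 'cV[R[i]]_n) :
  nsq (diag_mx u *m y) = \sum_k cabs (u 0 k) ^+ 2 * cabs (y k 0) ^+ 2.
Proof.
by rewrite /nsq mul_diag_mx; apply: eq_bigr => k _; rewrite mxE cabsM exprMn.
Qed.

Lemma cdot_diag (u : 'rV[R[i]]_n) (y : 'cV[R[i]]_n) :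
  cdot y (diag_mx u *m y) = \sum_k u 0 k * (cabs (y k 0) ^+ 2)%:C.
Proof.
rewrite /cdot mul_diag_mx; apply: eq_bigr => k _; rewrite mxE -conj_mul_self.
by rewrite mulrCA.
Qed.

End Transfer.


Section Main.
Variable R : realType.
Variable n : nat.
Variables U V : 'M[R[i]]_n.
Hypothesis hU : unitary U.
Hypothesis hV : unitary V.

Let W := adj U *m V.

Lemma tstar m p (A : 'M[R[i]]_(m, p)) : (map_mx Num.conj A)^T = adj A.
Proof. by []. Qed.

Lemma UadjU : U *m adj U = 1%:M.
Proof. exact: mulmx1C hU. Qed.
Lemma VadjV : V *m adj V = 1%:M.
Proof. exact: mulmx1C hV. Qed.

Lemma W_normal : W \is normalmx.
Proof.
suff h : W *m adj W = adj W *m W by apply/normalmxP; rewrite -map_trmx; exact h.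
rewrite /W adjM adjK.
rewrite -!mulmxA (mulmxA V) VadjV mul1mx (mulmxA U) UadjU mul1mx.
by rewrite hU hV.
Qed.

Let P := spectralmx W.
Let dv := spectral_diag W.

Lemma PadjP : P *m adj P = 1%:M.
Proof. have /unitarymxP := spectral_unitarymx W; rewrite -map_trmx; exact. Qed.
Lemma adjPP : adj P *m P = 1%:M.
Proof. exact: mulmx1C PadjP. Qed.

Lemma W_dec : W = adj P *m diag_mx dv *m P.
Proof.
have := orthomx_spectralP W_normal; rewrite invmx_unitary ?spectral_unitarymx //.
rewrite -map_trmx; exact.
Qed.


Lemma WadjW : adj W *m W = 1%:M.
Proof.
rewrite /W adjM adjK -!mulmxA (mulmxA U) UadjU mul1mx; exact: hV.
Qed.

Lemma nsq_P y : nsq (P *m y) = nsq y.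
Proof. exact: nsq_unitary adjPP. Qed.

Lemma nsq_adjP y : nsq (adj P *m y) = nsq y.
Proof. by apply: nsq_unitary; rewrite adjK PadjP. Qed.

Definition av k := complex.Re (dv 0 k).
Definition bv k := complex.Im (dv 0 k).

Lemma cabs0 : cabs (0 : R[i]) = 0.
Proof. exact: Normc.normc0. Qed.
Lemma cabs1 : cabs (1 : R[i]) = 1.
Proof. exact: Normc.normc1. Qed.

Definition ecol (k : 'I_n) : 'cV[R[i]]_n := \col_j ((j == k)%:R).

Lemma nsq_ecol k : nsq (ecol k) = 1.
Proof.
rewrite /nsq (bigD1 k) //= big1 ?mxE ?eqxx ?addr0.
  by rewrite cabs1 expr1n.
move=> j /negbTE; rewrite mxE => ->.
by rewrite cabs0 expr0n.
Qed.

Lemma nsq_diag_ecol (u : 'rV[R[i]]_n) k : nsq (diag_mx u *m ecol k) = cabs (u 0 k) ^+ 2.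
Proof.
rewrite nsq_diag (bigD1 k) //= big1 ?mxE ?eqxx ?addr0.
  by rewrite cabs1 expr1n mulr1.
move=> j /negbTE; rewrite mxE => ->.
by rewrite cabs0 expr0n mulr0.
Qed.

Lemma hab k : av k ^+ 2 + bv k ^+ 2 = 1.
Proof.
rewrite /av /bv -cabs_sqr.
have := nsq_unitary (adj P *m ecol k) WadjW.
rewrite nsq_adjP nsq_ecol W_dec -!mulmxA (mulmxA P) PadjP mul1mx nsq_adjP.
by rewrite nsq_diag_ecol.
Qed.

Definition qof (psi : 'cV[R[i]]_n) : 'rV[R]_n := \row_k (cabs ((P *m psi) k 0) ^+ 2).

Lemma qof_Q psi : vnorm psi = 1 -> Qs (qof psi).
Proof.
move=> /vnorm1 h; split=> [k|]; first by rewrite mxE sqr_ge0.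
rewrite -h -(nsq_P psi) /nsq; apply: eq_bigr => k _; by rewrite mxE.
Qed.

Lemma qof_surj q : Qs q -> exists psi, vnorm psi = 1 /\ qof psi = q.
Proof.
move=> [q0 q1].
pose phi : 'cV[R[i]]_n := \col_k ((Num.sqrt (q 0 k))%:C).
have hphi : forall k, cabs (phi k 0) ^+ 2 = q 0 k.
  by move=> k; rewrite mxE cabs_real ?sqrtr_ge0 // sqr_sqrtr.
exists (adj P *m phi); split.
  apply/vnorm1; rewrite nsq_adjP -q1 /nsq; apply: eq_bigr => k _; exact: hphi.
apply/rowP => k; rewrite mxE mulmxA PadjP mul1mx; exact: hphi.
Qed.

Lemma Re_mulr (z : R[i]) (r : R) : complex.Re (z * r%:C) = complex.Re z * r.
Proof. by case: z => p q /=; ring. Qed.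
Lemma Im_mulr (z : R[i]) (r : R) : complex.Im (z * r%:C) = complex.Im z * r.
Proof. by case: z => p q /=; ring. Qed.

Lemma val_D psi : Num.sqrt (1 - cabs (cdot psi (adj U *m V *m psi)) ^+ 2) =
  Num.sqrt (1 - (Aof av (qof psi) ^+ 2 + Aof bv (qof psi) ^+ 2)).
Proof.
change (adj U *m V) with W; rewrite W_dec -!mulmxA.
rewrite -cdotM cdot_diag cabs_sqr Re_sum Im_sum /Aof.
congr (Num.sqrt (1 - (_ ^+ 2 + _ ^+ 2))); apply: eq_bigr => k _.
  by rewrite Re_mulr [qof _ _ _]mxE.
by rewrite Im_mulr [qof _ _ _]mxE.
Qed.

Lemma val_F x psi : vnorm ((U - expi x *: V) *m psi) =
  Num.sqrt (\sum_k cval av bv x k * qof psi 0 k).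
Proof.
pose u : 'rV[R[i]]_n := \row_k (1 - expi x * dv 0 k).
have e1 : U - expi x *: V = U *m (1%:M - expi x *: W).
  by rewrite mulmxBr mulmx1 -scalemxAr /W mulmxA UadjU mul1mx.
have e2 : 1%:M - expi x *: W = adj P *m diag_mx u *m P.
  have -> : diag_mx u = 1%:M - expi x *: diag_mx dv.
    apply/matrixP => i j; rewrite !mxE; case: (i == j) => /=; ring.
  by rewrite mulmxBr mulmx1 mulmxBl adjPP -scalemxAr -scalemxAl -W_dec.
rewrite /vnorm -/(nsq _) e1 e2 -!mulmxA nsq_unitary // nsq_adjP nsq_diag.
congr Num.sqrt; apply: eq_bigr => k _; rewrite [u _ _]mxE [qof _ _ _]mxE cabs_sqr_expi.
by [].
Qed.



Lemma udist_eq : udist U V = sup (SDr av bv).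
Proof.
rewrite /udist /SDr; congr sup; apply/seteqP; split.
  by move=> _ [psi hpsi <-]; exists (qof psi); [exact: qof_Q | rewrite val_D].
move=> _ [q hq <-]; have [psi [hpsi <-]] := qof_surj hq.
by exists psi => //; rewrite val_D.
Qed.

Lemma opnorm_eq x : opnorm (U - expi x *: V) = sup (SFr av bv x).
Proof.
rewrite /opnorm /SFr; congr sup; apply/seteqP; split.
  by move=> _ [psi hpsi <-]; exists (qof psi); [exact: qof_Q | rewrite val_F].
move=> _ [q hq <-]; have [psi [hpsi <-]] := qof_surj hq.
by exists psi => //; rewrite val_F.
Qed.

End Main.

Local Close Scope complex_scope.
Local Close Scope classical_set_scope.

Theorem mainTheorem6 (R : realType) (n : nat) (U V : 'M[R[i]]_n) :
  (0 < n)%N -> unitary U -> unitary V ->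
  exists x : R, udist U V = 2^-1 * opnorm (U - expi x *: V).
Proof.
move=> n0 hU hV.
have [x hx] := reduced n0 (hab hU hV).
by exists x; rewrite (udist_eq hU hV) (opnorm_eq hU hV).
Qed.
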